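(* Let $\mathcal{A}$ be a finite set and $n\ge1$. Let $0<w_1\le w_2\le\dots\le w_n$, let $\eta_1,\dots,\eta_n>0$, let $a_1,\dots,a_n\in\mathcal{A}$, let $\hat\ell_1,\dots,\hat\ell_n:\mathcal{A}\to[0,\infty)$, and for each $i\in[n]$ let $\mathcal{M}_i\subseteq[i-1]$. Define $$\hat L_i(a)=\sum_{j\in[i-1]\setminus\mathcal{M}_i}w_j\hat\ell_j(a),\qquad \tilde L_{i+1}(a)=\sum_{j\in[i]}w_j\hat\ell_j(a),$$ and the distributions $\hat\pi_i(a)\propto\exp\big(-(\eta_i/w_i)\hat L_i(a)\big)$, $\tilde\pi_{i+1}(a)\propto\exp\big(-(\eta_i/w_i)\tilde L_{i+1}(a)\big)$ on $\mathcal{A}$. Assume $\hat\ell_i(a_i)\hat\pi_i(a_i)\le1$ for all $i\in[n]$. Then $$\sum_{i=1}^n w_i\,\hat\ell_i(a_i)\big[\hat\pi_i(a_i)-\tilde\pi_{i+1}(a_i)\big]\le\sum_{j=1}^n\sum_{a\in\mathcal{A}}\hat\ell_j(a)\Big(\eta_jw_j+\sum_{i\in[n]:\,j\in\mathcal{M}_i}\eta_iw_i\,\mathbb{I}\{a_i=a\}\Big).$$ *)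

(* Defs.v *)
From HB Require Import structures.
From mathcomp Require Import all_boot all_order all_algebra.
From mathcomp Require Import all_classical all_reals.
From mathcomp Require Import all_analysis.
Set Implicit Arguments. Unset Strict Implicit. Unset Printing Implicit Defensive.
Import Order.TTheory GRing.Theory Num.Theory.
Local Open Scope ring_scope.

Definition gibbs (R : realType) (A : finType) (c : R) (L : A -> R) (a : A) : R :=
  expR (- (c * L a)) / \sum_(b : A) expR (- (c * L b)).

(* Indices i in [n] are represented 0-based by 'I_n; [i-1] = {j | j < i}.
   hatL i a = sum_{j < i, j notin M i} w_j * lhat_j(a) *)
Definition hatL (R : realType) (A : finType) (n : nat) (w : 'I_n -> R)
  (lhat : 'I_n -> A -> R) (M : 'I_n -> {set 'I_n}) (i : 'I_n) (a : A) : R :=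
  \sum_(j : 'I_n | (j < i)%N && (j \notin M i)) w j * lhat j a.

Definition tildeL_succ (R : realType) (A : finType) (n : nat) (w : 'I_n -> R)
  (lhat : 'I_n -> A -> R) (i : 'I_n) (a : A) : R :=
  \sum_(j : 'I_n | (j <= i)%N) w j * lhat j a.

Definition hatpi (R : realType) (A : finType) (n : nat) (w eta : 'I_n -> R)
  (lhat : 'I_n -> A -> R) (M : 'I_n -> {set 'I_n}) (i : 'I_n) : A -> R :=
  gibbs (eta i / w i) (hatL w lhat M i).

Definition tildepi_succ (R : realType) (A : finType) (n : nat) (w eta : 'I_n -> R)
  (lhat : 'I_n -> A -> R) (i : 'I_n) : A -> R :=
  gibbs (eta i / w i) (tildeL_succ w lhat i).

(* Main.v *)
From HB Require Import structures.
From mathcomp Require Import all_boot all_order all_algebra all_classical all_reals all_analysis.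
From mathcomp Require Import ring.
Require Import Defs.
Import Order.TTheory GRing.Theory Num.Theory. Local Open Scope ring_scope.
Lemma gibbs_shift (R : realType) (A : finType) (c : R) (L L' : A -> R) (a : A) :
  0 <= c -> (forall b, L b <= L' b) ->
  gibbs c L a - gibbs c L' a <= gibbs c L a * (c * (L' a - L a)).
Proof.
move=> c0 hL; rewrite /gibbs.
set Z := \sum_b _; set Z' := \sum_b _.
have Z'pos : 0 < Z'.
  rewrite /Z' (bigD1 a) //= ltr_pwDl ?expR_gt0 //.
  by apply: sumr_ge0 => b _; exact: expR_ge0.
have ZZ : Z' <= Z.
  by apply: ler_sum => b _; rewrite ler_expR lerN2 ler_wpM2l.
have Zpos : 0 < Z by apply: lt_le_trans ZZ.
have e : expR (- (c * L' a)) = expR (- (c * L a)) * expR (- (c * (L' a - L a))).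
  by rewrite -expRD; congr expR; ring.
rewrite e.
set E := expR (- (c * L a)); set d := c * (L' a - L a).
have Epos : 0 < E by apply: expR_gt0.
have h1 : E * (1 - d) / Z <= E * expR (- d) / Z'.
  apply: (@le_trans _ _ (E * expR (- d) / Z)).
    rewrite ler_pM2r ?invr_gt0 // ler_pM2l //.
    by have := expR_ge1Dx (- d).
  rewrite ler_pM2l ?mulr_gt0 ?expR_gt0 //.
  by rewrite lef_pV2 ?posrE.
have -> : E / Z * d = E / Z - E * (1 - d) / Z by field; rewrite gt_eqF.
by rewrite lerD2l lerN2.
Qed.

Lemma tildeL_dec (R : realType) (A : finType) (n : nat) (w : 'I_n -> R)
  (lhat : 'I_n -> A -> R) (M : 'I_n -> {set 'I_n}) (i : 'I_n) (a : A) :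
  M i \subset [set j : 'I_n | (j < i)%N] ->
  tildeL_succ w lhat i a = hatL w lhat M i a + \sum_(j in M i) w j * lhat j a + w i * lhat i a.
Proof.
move=> hM; rewrite /tildeL_succ /hatL (bigD1 i) //= addrC; congr (_ + _).
rewrite (bigID (fun j => j \in M i)) /= addrC; congr (_ + _).
  apply: eq_bigl => j; rewrite -val_eqE /= [(j < i)%N]ltn_neqAle.
  by case: (j \in M i); case: (nat_of_ord j == i); case: (j <= i)%N.
apply: eq_bigl => j; apply/idP/idP.
  by case/andP.
move=> jM; have := fintype.subsetP hM j jM; rewrite inE => ji.
rewrite jM andbT (ltnW ji) /=; apply/eqP => e; by rewrite e ltnn in ji.
Qed.

Theorem mainTheorem4 (R : realType) (A : finType) (n : nat)
  (w eta : 'I_n -> R) (act : 'I_n -> A) (lhat : 'I_n -> A -> R)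
  (M : 'I_n -> {set 'I_n})
  (hn : (0 < n)%N)
  (hw_pos : forall i : 'I_n, 0 < w i)
  (hw_mono : forall i j : 'I_n, (i <= j)%N -> w i <= w j)
  (heta : forall i : 'I_n, 0 < eta i)
  (hl : forall (i : 'I_n) (a : A), 0 <= lhat i a)
  (hM : forall i : 'I_n, M i \subset [set j : 'I_n | (j < i)%N])
  (hbound : forall i : 'I_n,
     lhat i (act i) * hatpi w eta lhat M i (act i) <= 1) :
  \sum_(i : 'I_n) w i * lhat i (act i)
      * (hatpi w eta lhat M i (act i) - tildepi_succ w eta lhat i (act i))
  <= \sum_(j : 'I_n) \sum_(a : A) lhat j a *
       (eta j * w j + \sum_(i : 'I_n | j \in M i) eta i * w i * (act i == a)%:R).
Proof.
pose Dm i a := \sum_(j in M i) w j * lhat j a.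
have Dm0 : forall i a, 0 <= Dm i a.
  by move=> i a; apply: sumr_ge0 => j _; rewrite mulr_ge0 // ltW.
apply: (@le_trans _ _ (\sum_i (eta i * w i * lhat i (act i) + eta i * Dm i (act i)))).
  apply: ler_sum => i _.
  set c := eta i / w i.
  have c0 : 0 <= c by rewrite divr_ge0 // ltW.
  have hLL : forall b, hatL w lhat M i b <= tildeL_succ w lhat i b.
    move=> b; rewrite (@tildeL_dec R A n w lhat M i _ (hM i)) -addrA lerDl addr_ge0 //.
    exact: (Dm0 i b). by rewrite mulr_ge0 // ltW.
  have := @gibbs_shift R A c _ _ (act i) c0 hLL.
  rewrite -/(hatpi w eta lhat M i) -/(tildepi_succ w eta lhat i).
  rewrite (@tildeL_dec R A n w lhat M i _ (hM i)) -/(Dm i (act i)).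
  set p := hatpi _ _ _ _ _ (act i); set q := tildepi_succ _ _ _ _ (act i).
  move=> hpq.
  have wl0 : 0 <= w i * lhat i (act i) by rewrite mulr_ge0 // ltW.
  apply: (le_trans (ler_wpM2l wl0 hpq)).
  have -> : w i * lhat i (act i) * (p * (c * (hatL w lhat M i (act i) + Dm i (act i)
     + w i * lhat i (act i) - hatL w lhat M i (act i))))
     = (lhat i (act i) * p) * (eta i * w i * lhat i (act i) + eta i * Dm i (act i)).
    rewrite /c; field; rewrite gt_eqF //.
  rewrite -[X in _ <= X]mul1r ler_wpM2r //.
  by rewrite addr_ge0 // mulr_ge0 // ?mulr_ge0 // ltW.
rewrite big_split /=.
have -> : \sum_(j : 'I_n) \sum_(a : A) lhat j a *
       (eta j * w j + \sum_(i : 'I_n | j \in M i) eta i * w i * (act i == a)%:R)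
  = \sum_(j : 'I_n) \sum_(a : A) lhat j a * (eta j * w j) +
    \sum_(j : 'I_n) \sum_(i : 'I_n | j \in M i) eta i * w i * lhat j (act i).
  rewrite -big_split; apply: eq_bigr => j _.
  under eq_bigr do rewrite mulrDr.
  rewrite big_split /=; congr (_ + _).
  under eq_bigr do rewrite mulr_sumr.
  rewrite exchange_big /=; apply: eq_bigr => i _.
  rewrite (bigD1 (act i)) //= eqxx mulr1 big1 ?addr0; first by rewrite mulrC.
  by move=> b; rewrite eq_sym => /negbTE ->; rewrite mulr0 mulr0.
apply: lerD.
  apply: ler_sum => j _.
  rewrite (bigD1 (act j)) //= -[X in X <= _]addr0 mulrC lerD //.
  by apply: sumr_ge0 => b _; rewrite mulr_ge0 // mulr_ge0 // ltW.
apply: (@le_trans _ _ (\sum_i \sum_(j in M i) eta i * w i * lhat j (act i))).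
  apply: ler_sum => i _; rewrite /Dm mulr_sumr; apply: ler_sum => j jM.
  rewrite -!mulrA; apply: ler_wpM2l; first exact: ltW. apply: ler_wpM2r => //.
  apply: hw_mono; have := fintype.subsetP (hM i) j jM; rewrite inE; exact: ltnW.
rewrite (exchange_big_dep predT) //=.
Qed.
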